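(* Let $(G,\oplus)$ be a gyrogroup with identity $e$, and let $s\in G$ with $s\neq e$ and $s=\ominus s$. Then the L-Cayley graph $\mathrm{LCay}(G,\{s\})$ is vertex-transitive.
   Context: A gyrogroup is a nonempty set $G$ with a binary operation $\oplus$ such that: (i) there is a unique $e\in G$ with $e\oplus x=x=x\oplus e$ for all $x$; (ii) each $x\in G$ has a unique inverse $\ominus x$ with $\ominus x\oplus x=e=x\oplus(\ominus x)$; (iii) for all $x,y\in G$ there is an automorphism $\mathrm{gyr}[x,y]$ of $(G,\oplus)$ with $x\oplus(y\oplus z)=(x\oplus y)\oplus \mathrm{gyr}[x,y](z)$ for all $z\in G$; (iv) $\mathrm{gyr}[x\oplus y,y]=\mathrm{gyr}[x,y]$ for all $x,y$. For a subset $S\subseteq G$ with $e\notin S$, the L-Cayley graph $\mathrm{LCay}(G,S)$ is the directed graph with vertex set $G$ and a directed edge $u\to v$ iff $v=s\oplus u$ for some $s\in S$. A (directed) graph is (vertex-)transitive if for any two vertices $u,v$ there is a graph automorphism (a bijection of vertices preserving directed edges in both directions) sending $u$ to $v$. *)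

(* Defs.v *)
Definition bij {G : Type} (f : G -> G) : Prop :=
  exists g : G -> G, (forall x, g (f x) = x) /\ (forall x, f (g x) = x).

Definition groupoid_aut {G : Type} (op : G -> G -> G) (f : G -> G) : Prop :=
  bij f /\ forall a b, f (op a b) = op (f a) (f b).

Record is_gyrogroup {G : Type} (op : G -> G -> G) (e : G) (inv : G -> G)
    (gyr : G -> G -> G -> G) : Prop := {
  gyro_idl : forall x, op e x = x;
  gyro_idr : forall x, op x e = x;
  gyro_id_uniq : forall e', (forall x, op e' x = x /\ op x e' = x) -> e' = e;
  gyro_invl : forall x, op (inv x) x = e;
  gyro_invr : forall x, op x (inv x) = e;
  gyro_inv_uniq : forall x y, op y x = e -> op x y = e -> y = inv x;
  gyro_gyr_aut : forall x y, groupoid_aut op (gyr x y);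
  gyro_assoc : forall x y z, op x (op y z) = op (op x y) (gyr x y z);
  gyro_loop : forall x y z, gyr (op x y) y z = gyr x y z
}.

Definition LCay_edge {G : Type} (op : G -> G -> G) (S : G -> Prop) (u v : G) : Prop :=
  exists s, S s /\ v = op s u.

Definition graph_aut {G : Type} (E : G -> G -> Prop) (f : G -> G) : Prop :=
  bij f /\ forall u v, E u v <-> E (f u) (f v).

Definition vertex_transitive {G : Type} (E : G -> G -> Prop) : Prop :=
  forall u v : G, exists f, graph_aut E f /\ f u = v.

(* Main.v *)
Require Import Defs.
From Stdlib Require Import Classical ClassicalEpsilon.

Section Inv.
Variable G : Type.
Variable L : G -> G.
Hypothesis LL : forall y, L (L y) = y.
Hypothesis Lfp : forall y, L y <> y.

Definition dec (P : Prop) : bool := if excluded_middle_informative P then true else false.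
Lemma decT (P : Prop) : P -> dec P = true.
Proof. unfold dec; destruct (excluded_middle_informative P); tauto. Qed.
Lemma decF (P : Prop) : ~P -> dec P = false.
Proof. unfold dec; destruct (excluded_middle_informative P); tauto. Qed.

Definition swp (u v x : G) : G :=
  if dec (x = u) then v else if dec (x = L u) then L v else
  if dec (x = v) then u else if dec (x = L v) then L u else x.

Ltac cs P := destruct (classic P); [rewrite (decT P) by assumption | rewrite (decF P) by assumption].

Lemma swp_inv u v x : swp u v (swp u v x) = x.
Proof.
  unfold swp.
  pose proof (LL u); pose proof (LL v); pose proof (LL x);
  pose proof (Lfp u); pose proof (Lfp v); pose proof (Lfp x).
  cs (x = u); [| cs (x = L u); [| cs (x = v); [| cs (x = L v)]]];
  repeat match goal with |- context [dec ?P] => cs P end; subst; try congruence.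
Qed.

Lemma swp_L u v x : swp u v (L x) = L (swp u v x).
Proof.
  unfold swp.
  pose proof (LL u); pose proof (LL v); pose proof (LL x);
  pose proof (Lfp u); pose proof (Lfp v); pose proof (Lfp x).
  repeat match goal with |- context [dec ?P] => cs P end; try congruence;
  subst; try congruence.
Qed.

Lemma vt_inv : vertex_transitive (fun a b => b = L a).
Proof.
  intros u v. exists (swp u v). split.
  - split. exists (swp u v); split; apply swp_inv.
    intros a b; split; intro H.
    + subst b; apply swp_L.
    + rewrite <- swp_L in H. rewrite <- (swp_inv u v b), H, swp_inv. reflexivity.
  - unfold swp. rewrite decT; reflexivity.
Qed.
End Inv.

Theorem mainTheorem1 (G : Type) (op : G -> G -> G) (e : G) (inv : G -> G)
    (gyr : G -> G -> G -> G) (Hg : is_gyrogroup op e inv gyr)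
    (s : G) (hse : s <> e) (hsinv : s = inv s) :
  vertex_transitive (LCay_edge op (fun x => x = s)).
Proof.
  destruct Hg as [idl idr _ invl invr _ aut assoc loop].
  assert (ge : forall a z, gyr e a z = z).
  { intros a w.
    destruct (aut e a) as [[gi [gi1 gi2]] _].
    assert (Hc : forall z, op (inv a) (op a z) = gyr e a z).
    { intro z. rewrite assoc, invl, idl, <- loop, invl. reflexivity. }
    assert (Ha : forall z, op a z = op a (gyr e a z)).
    { intro z. rewrite <- (idl (op a z)), assoc, idl. reflexivity. }
    pose proof (Hc (gi w)) as H1. rewrite Ha, gi2, Hc in H1.
    exact H1. }
  assert (lc : forall a z, op (inv a) (op a z) = z).
  { intros a z. rewrite assoc, invl, idl, <- loop, invl, ge. reflexivity. }
  assert (LL : forall y, op s (op s y) = y).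
  { intro y. rewrite hsinv at 1. apply lc. }
  assert (Lfp : forall y, op s y <> y).
  { intros u Hu. apply hse.
    assert (gg : forall z, gyr s u z = z).
    { intro z. rewrite <- loop, Hu. rewrite <- (idl u) at 1. rewrite loop. apply ge. }
    pose proof (assoc s u (inv u)) as H. rewrite Hu, gg, invr, idr in H. exact H. }
  intros u v. destruct (vt_inv G (op s) LL Lfp u v) as [f [[Hb He] Hf]].
  exists f; split; [split; [exact Hb|] | exact Hf].
  intros a b; unfold LCay_edge; split.
  - intros [x [Hx Hb']]; subst x. exists s; split; [reflexivity|]. exact (proj1 (He a b) Hb').
  - intros [x [Hx Hb']]; subst x. exists s; split; [reflexivity|]. exact (proj2 (He a b) Hb').
Qed.
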